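(* Let $A_\bullet$ be a simplicial commutative ring, and let $a\in N_n(A)$, $b\in N_{n+1}(A)$, $c\in A_n$. Then: (1) if $ca^2=0$, then $s_0(c)q(a)\in N_{n+1}(A)$; (2) if in addition $c\,a\,s_0d_0(a)=0$ (in particular if $a$ is a cycle), then $s_0(c)q(a)$ is a cycle; (3) if $s_0(c)b^2=0$, then $s_0(c)q(d_0(b))$ is a boundary.
   Context: For $a\in A_n$ put $q(a)=s_0(a)s_1(a)\in A_{n+1}$. $N_n(A)=\bigcap_{1\le i\le n}\ker(d_i)$ is the normalized chain complex with differential $d_0$; cycles and boundaries refer to this complex. *)

(* Defs.v *)
From HB Require Import structures.
From mathcomp Require Import all_boot all_algebra.
Set Implicit Arguments. Unset Strict Implicit. Unset Printing Implicit Defensive.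
Import GRing.Theory.
Local Open Scope ring_scope.

(* Indices are nats; values of d/s at out-of-range
   indices are irrelevant (never used). *)
Record scRing := SCRing {
  sc_obj :> nat -> comPzRingType;
  sc_d : forall n, nat -> {rmorphism sc_obj n.+1 -> sc_obj n};
  sc_s : forall n, nat -> {rmorphism sc_obj n -> sc_obj n.+1};
  sc_dd : forall n i j (x : sc_obj n.+2), (i < j)%N -> (j <= n.+2)%N ->
      sc_d n i (sc_d n.+1 j x) = sc_d n j.-1 (sc_d n.+1 i x);
  sc_ss : forall n i j (x : sc_obj n), (i <= j)%N -> (j <= n)%N ->
      sc_s n.+1 i (sc_s n j x) = sc_s n.+1 j.+1 (sc_s n i x);
  sc_ds_lt : forall n i j (x : sc_obj n.+1), (i < j)%N -> (j <= n.+1)%N ->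
      sc_d n.+1 i (sc_s n.+1 j x) = sc_s n j.-1 (sc_d n i x);
  sc_ds_eq : forall n j (x : sc_obj n), (j <= n)%N ->
      sc_d n j (sc_s n j x) = x;
  sc_ds_eq1 : forall n j (x : sc_obj n), (j <= n)%N ->
      sc_d n j.+1 (sc_s n j x) = x;
  sc_ds_gt : forall n i j (x : sc_obj n.+1), (j.+1 < i)%N -> (i <= n.+2)%N ->
      sc_d n.+1 i (sc_s n.+1 j x) = sc_s n j (sc_d n i.-1 x)
}.

Arguments sc_d {s n}.
Arguments sc_s {s n}.

Definition q (A : scRing) (n : nat) (a : A n.+1) : A n.+2 :=
  sc_s 0 a * sc_s 1 a.

Definition inN (A : scRing) (n : nat) : A n -> Prop :=
  match n return A n -> Prop with
  | 0 => fun _ => True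
  | m.+1 => fun x => forall i, (1 <= i <= m.+1)%N -> sc_d i x = 0
  end.

Definition isCycle (A : scRing) (n : nat) : A n -> Prop :=
  match n return A n -> Prop with
  | 0 => fun x => inN x
  | m.+1 => fun x => inN x /\ sc_d 0 x = 0
  end.

Definition isBoundary (A : scRing) (n : nat) (x : A n) : Prop :=
  inN x /\ exists y : A n.+1, inN y /\ sc_d 0 y = x.

(* Main.v *)
Require Import Defs.
From HB Require Import structures.
From mathcomp Require Import all_boot all_algebra zify.
Import GRing.Theory.
Local Open Scope ring_scope.

Lemma part1 (A : scRing) (m : nat) (a : A m.+1) (c : A m.+1) :
  inN a -> c * a ^+ 2 = 0 -> inN (sc_s 0 c * q a).
Proof.
move=> Na ca2 i /andP[hi1 hi2]; rewrite /q !rmorphM.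
case: (ltngtP i 1) => [|hi|->]; first by rewrite ltnNge hi1.
- rewrite [sc_d i (sc_s 0 a)](@sc_ds_gt A m i 0) //.
  rewrite (Na i.-1); last by apply/andP; split; lia.
  by rewrite rmorph0 !(mulr0, mul0r).
- by rewrite (@sc_ds_eq1 A m.+1 0) // (@sc_ds_eq1 A m.+1 0) // (@sc_ds_eq A m.+1 1) // -mulrA -expr2.
Qed.

Theorem lemma3p3 (A : scRing) (m : nat)
    (a : A m.+1) (b : A m.+2) (c : A m.+1) :
  inN a -> inN b ->
  [/\ (c * a ^+ 2 = 0 -> inN (sc_s 0 c * q a)),
      (c * a ^+ 2 = 0 -> c * a * sc_s 0 (sc_d 0 a) = 0 ->
         isCycle (sc_s 0 c * q a))
    & (sc_s 0 c * b ^+ 2 = 0 -> isBoundary (sc_s 0 c * q (sc_d 0 b)))].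
Proof.
move=> Na Nb; split; first exact: part1.
  move=> ca2 cas; split; first exact: part1.
  rewrite /q !rmorphM (@sc_ds_eq A m.+1 0) // (@sc_ds_eq A m.+1 0) //.
  by rewrite (@sc_ds_lt A m 0 1) // mulrA.
move=> scb.
pose y : A m.+3 := sc_s 0 (sc_s 0 c) * sc_s 1 b * sc_s 2 b.
have Ny : inN y.
  move=> i /andP[hi1 hi2]; rewrite /y !rmorphM.
  case: (ltngtP i 2) => [hi|hi|->].
  - have -> : i = 1%N by lia.
    rewrite (@sc_ds_lt A m.+1 1 2) // (Nb 1%N) //.
    by rewrite rmorph0 !(mulr0, mul0r).
  - rewrite (@sc_ds_gt A m.+1 i 1) // (Nb i.-1); last by apply/andP; split; lia.
    by rewrite rmorph0 !(mulr0, mul0r).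
  - rewrite (@sc_ds_eq1 A m.+2 1) // (@sc_ds_eq A m.+2 2) //.
    rewrite (@sc_ds_gt A m.+1 2 0) // (@sc_ds_eq1 A m.+1 0) //.
    by rewrite -mulrA -expr2.
have d0y : sc_d 0 y = sc_s 0 c * q (sc_d 0 b).
  rewrite /y /q !rmorphM (@sc_ds_eq A m.+2 0) // (@sc_ds_lt A m.+1 0 1) //.
  by rewrite (@sc_ds_lt A m.+1 0 2) // mulrA.
split; last by exists y.
move=> i /andP[hi1 hi2]; rewrite -d0y.
rewrite -(@sc_dd A m.+1 0 i.+1) ?(Ny i.+1) ?rmorph0 //; lia.
Qed.
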